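(* Let $(Q,P)$ be a weakly quasi-lattice ordered group and let $\Lambda$ be a $P$-graph with $\mathrm{FA}(\Lambda)\neq\emptyset$. Suppose $\mu,\mu'\in\Lambda$ with $s(\mu)=r(\mu')$, $\mu\mu'\in\mathrm{FA}(\Lambda)$, and $(w_n)$ is a sequence converging to $w$ in $Z(\mu')$. Then there is a subsequence $(w_{n_k})$ such that $\mu\cdot w_{n_k}\to\mu\cdot w$ in $Z(\mu\mu')$.
   Context: $(Q,P)$ weakly quasi-lattice ordered: $Q$ a discrete group, $P\subseteq Q$ a subsemigroup containing the identity $e$ with $P\cap P^{-1}=\{e\}$, and, with $p\le r$ meaning $pq=r$ for some $q\in P$, any two elements of $P$ with a common upper bound have a least common upper bound. A $P$-graph is a countable small category $\Lambda$ (identities $\Lambda^{(0)}$, range/source $r,s$) with a functor $d:\Lambda\to P$ with unique factorisation (if $d(\lambda)=pq$ there are unique $\mu,\nu$ with $\lambda=\mu\nu$, $d(\mu)=p$, $d(\nu)=q$). Write $\lambda\Lambda=\{\lambda\mu: s(\lambda)=r(\mu)\}$, $\mu\preceq\lambda$ iff $\lambda\in\mu\Lambda$. $\mathrm{FA}(\Lambda)$ is the set of $\lambda$ such that for all $\mu\in\lambda\Lambda,\nu\in\Lambda$ there is finite $J\subseteq\Lambda$ with $\mu\Lambda\cap\nu\Lambda=\bigcup_{\kappa\in J}\kappa\Lambda$. A filter is a nonempty hereditary and directed subset of $\Lambda$ (w.r.t. $\preceq$); $\mathcal{F}(\Lambda)$ is the set of filters, topologised as a subspace of $\mathcal{P}(\Lambda)\cong\{0,1\}^\Lambda$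 with the product topology. For $\nu\in\Lambda$, $Z(\nu)=\{x\in\mathcal{F}(\Lambda):\nu\in x\}$ with the subspace topology. For a filter $w$ whose unique element of $\Lambda^{(0)}$ is $s(\mu)$, $\mu\cdot w=\{\zeta\in\Lambda:\zeta\preceq\mu\gamma\text{ for some }\gamma\in w\}$. *)

(* Defs.v *)
From HB Require Import structures.
From mathcomp Require Import all_boot all_order all_algebra.
From mathcomp Require Import all_classical all_reals all_analysis.
Set Implicit Arguments. Unset Strict Implicit. Unset Printing Implicit Defensive.
Local Open Scope classical_set_scope.

Definition is_group {Q : Type} (mul : Q -> Q -> Q) (e : Q) (inv : Q -> Q) : Prop :=
  (forall a b c, mul a (mul b c) = mul (mul a b) c) /\
  (forall a, mul e a = a) /\ (forall a, mul a e = a) /\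
  (forall a, mul (inv a) a = e) /\ (forall a, mul a (inv a) = e).

Definition Ple {Q : Type} (mul : Q -> Q -> Q) (P : Q -> Prop) (p r : Q) : Prop :=
  exists q, P q /\ mul p q = r.

Definition wqlo {Q : Type} (mul : Q -> Q -> Q) (e : Q) (inv : Q -> Q)
  (P : Q -> Prop) : Prop :=
  is_group mul e inv /\
  (forall p q, P p -> P q -> P (mul p q)) /\ P e /\
  (forall p, P p -> P (inv p) -> p = e) /\
  (forall p q, P p -> P q ->
     (exists u, P u /\ Ple mul P p u /\ Ple mul P q u) ->
     exists c, P c /\ Ple mul P p c /\ Ple mul P q c /\
       forall u, P u -> Ple mul P p u -> Ple mul P q u -> Ple mul P c u).

(* A small category: objects Obj (identified with the identity morphisms
   idm v, which form Lambda^(0)), morphisms Mor, range/source r s,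
   composition cmp (only meaningful on composable pairs s a = r b),
   degree functor d : Mor -> Q. *)
Record PGraph (Q : Type) := {
  Obj : Type;
  Mor : Type;
  rg : Mor -> Obj;
  src : Mor -> Obj;
  idm : Obj -> Mor;
  cmp : Mor -> Mor -> Mor;
  deg : Mor -> Q }.
Arguments Obj {Q} p.
Arguments Mor {Q} p.
Arguments rg {Q} p _.
Arguments src {Q} p _.
Arguments idm {Q} p _.
Arguments cmp {Q} p _ _.
Arguments deg {Q} p _.

Definition is_Pgraph {Q : Type} (mul : Q -> Q -> Q) (e : Q) (P : Q -> Prop)
  (G : PGraph Q) : Prop :=
  (forall v, rg G (idm G v) = v /\ src G (idm G v) = v) /\
  (forall a, cmp G (idm G (rg G a)) a = a /\ cmp G a (idm G (src G a)) = a) /\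
  (forall a b, src G a = rg G b -> rg G (cmp G a b) = rg G a /\ src G (cmp G a b) = src G b) /\
  (forall a b c, src G a = rg G b -> src G b = rg G c ->
     cmp G (cmp G a b) c = cmp G a (cmp G b c)) /\
  (exists f : Mor G -> nat, injective f) /\
  (exists f : Obj G -> nat, injective f) /\
  (forall a, P (deg G a)) /\
  (forall v, deg G (idm G v) = e) /\
  (forall a b, src G a = rg G b -> deg G (cmp G a b) = mul (deg G a) (deg G b)) /\
  (forall l p q, P p -> P q -> deg G l = mul p q ->
     (exists m n, src G m = rg G n /\ l = cmp G m n /\ deg G m = p /\ deg G n = q) /\
     (forall m n m' n',
        src G m = rg G n -> l = cmp G m n -> deg G m = p -> deg G n = q ->
        src G m' = rg G n' -> l = cmp G m' n' -> deg G m' = p -> deg G n' = q ->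
        m = m' /\ n = n')).

Section PGraphNotions.
Variables (Q : Type) (G : PGraph Q).

Definition ext (l : Mor G) : set (Mor G) :=
  [set z | exists n, src G l = rg G n /\ z = cmp G l n].

Definition preceq (m l : Mor G) : Prop := ext m l.

Definition FA (l : Mor G) : Prop :=
  forall m n, ext l m ->
    exists (k : nat) (J : nat -> Mor G),
      forall z, (ext m z /\ ext n z) <-> (exists i, (i < k)%N /\ ext (J i) z).

(* subsets of Lambda, i.e. points of {0,1}^Lambda with the product topology *)
Definition PL := {ptws Mor G -> bool}.

Definition is_filter (x : Mor G -> bool) : Prop :=
  (exists l, x l) /\
  (forall m l, preceq m l -> x l -> x m) /\
  (forall l m, x l -> x m -> exists n, x n /\ preceq l n /\ preceq m n).

(* Z(nu) as a subset of P(Lambda) (its topology is the subspace topology) *)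
Definition Zset (nu : Mor G) : set PL := [set x | is_filter x /\ x nu].

Definition dot (mu : Mor G) (w : Mor G -> bool) : PL :=
  fun z => `[< exists g, w g /\ src G mu = rg G g /\ preceq z (cmp G mu g) >].

End PGraphNotions.
Arguments ext {Q} G _ _.
Arguments preceq {Q} G _ _.
Arguments FA {Q} G _.
Arguments PL {Q} G.
Arguments is_filter {Q} G _.
Arguments Zset {Q} G _ _.
Arguments dot {Q} G _ _ _.

(* Main.v *)
Set Warnings "-all".
Require Import Defs.
From HB Require Import structures.
From mathcomp Require Import all_boot all_order all_algebra.
From mathcomp Require Import all_classical all_reals all_analysis.
Local Open Scope classical_set_scope.
Set Implicit Arguments. Unset Strict Implicit.

Lemma cvg_within_of (T : topologicalType) (A : set T) (F: set_system T) {FF : Filter F} (x : T) :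
  F --> x -> F A -> F --> within A (nbhs x).
Proof.
move=> Fx FA P /= HP.
apply: (filterS2 FF (P:=A) (Q:=fun t => A t -> P t) (R:=P) _ FA (Fx _ HP)).
by move=> y Ay; apply.
Qed.

Lemma ext_refl Q mul e P (G : PGraph Q) (HG : is_Pgraph mul e P G) l : ext G l l.
Proof.
case: HG => Hid [Hunit _].
exists (idm G (src G l)); split; first by case: (Hid (src G l)).
by case: (Hunit l).
Qed.

Lemma ext_trans Q mul e P (G : PGraph Q) (HG : is_Pgraph mul e P G) a b c :
  ext G a b -> ext G b c -> ext G a c.
Proof.
case: HG => _ [_ [Hcmp [Hass _]]].
move=> [n [Hn ->]] [n' [Hn' ->]].
have [H1 H2] := Hcmp _ _ Hn.
exists (cmp G n n'); split.
  rewrite Hn; rewrite H2 in Hn'; by case: (Hcmp _ _ Hn').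
by rewrite Hass // -H2.
Qed.

Lemma ext_rg Q mul e P (G : PGraph Q) (HG : is_Pgraph mul e P G) a b :
  ext G a b -> rg G b = rg G a.
Proof.
case: HG => _ [_ [Hcmp _]] [n [Hn ->]]; by case: (Hcmp _ _ Hn).
Qed.

Lemma cancel_cmp Q mul e inv P (G : PGraph Q) (HQ : wqlo mul e inv P)
  (HG : is_Pgraph mul e P G) mu a b :
  src G mu = rg G a -> src G mu = rg G b -> cmp G mu a = cmp G mu b -> a = b.
Proof.
move=> Ha Hb Hab.
case: HQ => [[Hassoc [He1 [He2 [Hinv1 Hinv2]]]] _].
case: HG => _ [_ [_ [_ [_ [_ [HP [_ [Hdeg Huf]]]]]]]].
have Hd : deg G a = deg G b.
  have := Hdeg _ _ Ha; rewrite Hab Hdeg // => /(f_equal (mul (inv (deg G mu)))).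
  by rewrite !Hassoc Hinv1 !He1.
have [_ U] := Huf (cmp G mu a) (deg G mu) (deg G a) (HP _) (HP _) (Hdeg _ _ Ha).
by have [_ ->] := U mu a mu b Ha erefl erefl erefl Hb Hab erefl (esym Hd).
Qed.

Lemma ext_mono Q mul e P (G : PGraph Q) (HG : is_Pgraph mul e P G) mu a b :
  src G mu = rg G a -> ext G a b -> ext G (cmp G mu a) (cmp G mu b).
Proof.
move=> Ha [n [Hn ->]].
have HG' := HG.
case: HG => _ [_ [Hcmp [Hass _]]].
exists n; split; first by have [_ ->] := Hcmp _ _ Ha.
by rewrite Hass.
Qed.

Lemma ext_cancel Q mul e inv P (G : PGraph Q) (HQ : wqlo mul e inv P)
  (HG : is_Pgraph mul e P G) mu a b :
  src G mu = rg G a -> src G mu = rg G b ->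
  ext G (cmp G mu a) (cmp G mu b) -> ext G a b.
Proof.
move=> Ha Hb [n [Hn Heq]].
have HG' := HG.
case: HG => _ [_ [Hcmp [Hass _]]].
have [_ Hs] := Hcmp _ _ Ha.
rewrite Hs in Hn.
exists n; split => //.
apply: (cancel_cmp (mu:=mu) (a:=b) (b:=cmp G a n) HQ HG' Hb); last by rewrite Heq Hass.
by have [-> _] := Hcmp _ _ Hn.
Qed.
Lemma ptws_cvg (T : Type) (F : set_system {ptws T -> bool}) (f : {ptws T -> bool}) {FF : Filter F} :
  (F --> f) <-> (forall t, \forall g \near F, g t = f t).
Proof.
have := (@cvg_sup _ _ (fun i => Topological.class (initial_topology (fun f : (T -> bool) => f i))) F f FF).
move=> H.
have surj : forall t, [set f0 t | f0 in [set: T -> bool]] = [set: bool].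
  move=> t; apply/seteqP; split => // b _; by exists (fun _ => b).
split.
- move=> /H Hi t.
  have := Hi t. 
  move/(@cvg_image _ _ (fun f : T -> bool => f t) F f FF) => /(_ (surj t)).
  move=> /(_ [set f t]) []; first by apply: discrete_set1.
  move=> A FA HA; apply: filterS FA => g Ag.
  have : [set f0 t | f0 in A] (g t) by exists g.
  by rewrite HA.
- move=> Hp; apply/H => t.
  apply/(@cvg_image _ _ (fun f : T -> bool => f t) F f FF (surj t)).
  move=> B /= HB.
  have Bf : B (f t) by apply: nbhs_singleton.
  exists [set g | B (g t)].
    apply: filterS (Hp t) => g /= ->; done.
  apply/seteqP; split => b /=; first by case=> g ? <-.
  by move=> Bb; exists (fun _ => b).
Qed.

Lemma near_all (F : set_system nat) {FF : Filter F} (k : nat) (Pr : nat -> nat -> Prop) :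
  (forall i, (i < k)%N -> F (Pr i)) -> F (fun n => forall i, (i < k)%N -> Pr i n).
Proof.
elim: k => [|k IH] H.
  by apply: nearW => n i; rewrite ltn0.
have H1 := IH (fun i ik => H i (ltnW ik)).
apply: (filterS2 FF _ H1 (H k (ltnSn k))) => n Hall Hk i.
rewrite ltnS leq_eqVlt => /orP [/eqP -> // | ik]; exact: Hall.
Qed.

Lemma dot_Z Q mul e P (G : PGraph Q) (HG : is_Pgraph mul e P G) mu mu' x :
  src G mu = rg G mu' -> Zset G mu' x -> Zset G (cmp G mu mu') (dot G mu x).
Proof.
move=> Hc [[Hne [Hher Hdir]] Hx].
have Hdot : forall z, dot G mu x z <-> exists g, x g /\ src G mu = rg G g /\ preceq G z (cmp G mu g).
  move=> z; split; [by move/asboolP | by move=> H; apply/asboolP].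
have Hmm : dot G mu x (cmp G mu mu').
  by apply/Hdot; exists mu'; split => //; split => //; exact: (ext_refl HG _).
split; last exact Hmm.
split; first by exists (cmp G mu mu').
split.
- move=> m l Hml /Hdot [g [xg [Hg Hl]]]; apply/Hdot; exists g; split=>//; split=>//.
  exact: (ext_trans HG Hml Hl).
- move=> l m /Hdot [g1 [x1 [H1 Hl]]] /Hdot [g2 [x2 [H2 Hm]]].
  have [n [xn [Hgn1 Hgn2]]] := Hdir _ _ x1 x2.
  have Hn : src G mu = rg G n by rewrite (ext_rg HG Hgn1).
  exists (cmp G mu n); split.
    apply/Hdot; exists n; split => //; split => //; exact: (ext_refl HG _).
  split.
  + exact: (ext_trans HG Hl (ext_mono HG H1 Hgn1)).
  + exact: (ext_trans HG Hm (ext_mono HG H2 Hgn2)).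
Qed.

Lemma dot_pt Q mul e inv P (G : PGraph Q) (HQ : wqlo mul e inv P)
  (HG : is_Pgraph mul e P G) mu mu' (Hc : src G mu = rg G mu')
  (HFAm : FA G (cmp G mu mu')) (w : nat -> PL G) (w0 : PL G)
  (Hw : forall n, Zset G mu' (w n))
  (Hpt : forall t, \forall n \near \oo, w n t = w0 t) t :
  \forall n \near \oo, dot G mu (w n) t = dot G mu w0 t.
Proof.
have HG' := HG.
case: HG' => _ [_ [Hcmp [Hass _]]].
case E: (dot G mu w0 t).
- move/asboolP: E => [g [xg [Hg Ht]]].
  apply: filterS (Hpt g) => n Hn; apply/asboolP; exists g; rewrite Hn; split => //.
- have [k [J HJ]] := HFAm (cmp G mu mu') t (ext_refl HG _).
  have Hi : forall i, (i < k)%N -> \forall n \near \oo,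
      exists a, src G mu = rg G a /\ J i = cmp G mu a /\ w n a = false.
    move=> i ik.
    have [[eta [Heta HJi]] Hti] := (HJ (J i)).2 (ex_intro _ i (conj ik (ext_refl HG _))).
    have Hc2 : src G mu' = rg G eta.
      by rewrite -Heta; have [_ ->] := Hcmp _ _ Hc.
    set a := cmp G mu' eta.
    have Ha : src G mu = rg G a by rewrite /a; have [-> _] := Hcmp _ _ Hc2.
    have HJa : J i = cmp G mu a by rewrite HJi /a Hass.
    have w0a : w0 a = false.
      apply/negbTE/negP => wa.
      have : dot G mu w0 t.
        apply/asboolP; exists a; split => //; split => //; by rewrite -HJa.
      by rewrite E.
    apply: filterS (Hpt a) => n Hn; exists a; rewrite Hn w0a; done.
  have Hall : \forall n \near \oo, forall i, (i < k)%N ->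
      exists a, src G mu = rg G a /\ J i = cmp G mu a /\ w n a = false.
    exact: near_all.
  apply: filterS Hall => n Hn.
  apply/negbTE/negP => /asboolP [g [wg [Hg Htg]]].
  have [[_ [Hher Hdir]] Hmu'] := Hw n.
  have [h [wh [Hgh Hmh]]] := Hdir _ _ wg Hmu'.
  have Hh : src G mu = rg G h by rewrite (ext_rg HG Hgh).
  have H1 : ext G t (cmp G mu h) := ext_trans HG Htg (ext_mono HG Hg Hgh).
  have H2 : ext G (cmp G mu mu') (cmp G mu h) := ext_mono HG Hc Hmh.
  have [i [ik Hi']] := (HJ (cmp G mu h)).1 (conj H2 H1).
  have [a [Ha [HJa wa]]] := Hn i ik.
  rewrite HJa in Hi'.
  have Hah := ext_cancel HQ HG Ha Hh Hi'.
  have := Hher _ _ Hah wh; by rewrite wa.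
Qed.

Theorem lemma5p13 (Q : Type) (mul : Q -> Q -> Q) (e : Q) (inv : Q -> Q)
  (P : Q -> Prop) (G : PGraph Q)
  (HQ : wqlo mul e inv P) (HG : is_Pgraph mul e P G)
  (HFA : exists l, FA G l)
  (mu mu' : Mor G) (Hc : src G mu = rg G mu') (HFAm : FA G (cmp G mu mu'))
  (w : nat -> subspace (Zset G mu')) (w0 : subspace (Zset G mu'))
  (Hw : forall n, Zset G mu' (w n)) (Hw0 : Zset G mu' w0)
  (Hconv : w @ \oo --> w0) :
  exists phi : nat -> nat, (forall k, (phi k < phi k.+1)%N) /\
    ((fun k => (dot G mu (w (phi k)) : subspace (Zset G (cmp G mu mu')))) @ \oo
       --> (dot G mu w0 : subspace (Zset G (cmp G mu mu')))).
Proof.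
exists id; split; first by move=> k; exact: ltnSn.
have Hw' : w @ \oo --> (w0 : PL G).
  have H := (subspace_cvgP (A:=Zset G mu') (F:=w @ \oo) _ Hw0).1 Hconv.
  move=> U HU; apply: H; rewrite /within /=; by apply: filterS HU => y Uy _.
have Hpt := (ptws_cvg _).1 Hw'.
apply/(subspace_cvgP (A:=Zset G (cmp G mu mu')) _ (dot_Z HG Hc Hw0)).
apply: (cvg_within_of (F := (fun k => dot G mu (w k) : PL G) @ \oo)).
  2: by exists 0%N => // n _; exact: (dot_Z HG Hc (Hw n)).
apply/ptws_cvg => t.
exact: (dot_pt HQ HG Hc HFAm Hw (Hpt _) t).
Qed.
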